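(* Let $(X_i,x_i,d_i)_{i\in\mathbb{Z}^+}$ be pointed metric spaces. For each $i$, let $R_i\colon X_i\times I\to X_i$ be a strong deformation contraction of $X_i$ to $x_i$. Define $R\colon(\bigvee^m_i X_i)\times I\to\bigvee^m_i X_i$ by $R(x,t)=R_i(x,t)$ for $x\in X_i$. Then $R$ is well defined and is a (continuous) strong deformation contraction of the metric wedge $\bigvee^m_i X_i$ to its wedge point.
   Context: Let $I=[0,1]$. A strong deformation contraction of a pointed metric space $(X,x_0,d)$ to $x_0$ is a continuous map $H\colon X\times I\to X$ such that: (1) $H(x,0)=x$ for all $x$; (2) $H(X\times\{1\})=H(\{x_0\}\times I)=\{x_0\}$; (3) $d(H(x,t),H(y,t))\le d(x,y)$ for all $x,y\in X$ and all $t\in I$. The metric wedge $\bigvee^m_i X_i$ of pointed metric spaces $(X_i,x_i,d_i)$ is the disjoint union of the $X_i$ with all the points $x_i$ identified to a single wedge point. It carries the metric $d_\vee$ given by: - $d_\vee(x,y)=d_j(x,y)$ if $x,y\in X_j$ for some $j$; - $d_\vee(x,y)=d_j(x,x_j)+d_k(y,x_k)$ if $x\in X_j$, $y\in X_k$ with $j\ne k$. *)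

(* Defs.v *)
From Stdlib Require Import Reals Lra Classical ClassicalEpsilon Arith.
Open Scope R_scope.

Record PMetric := {
  pm_car :> Type;
  pm_d : pm_car -> pm_car -> R;
  pm_pt : pm_car;
  pm_d_eq0 : forall x y, pm_d x y = 0 <-> x = y;
  pm_d_sym : forall x y, pm_d x y = pm_d y x;
  pm_d_tri : forall x y z, pm_d x z <= pm_d x y + pm_d y z
}.

(** H : T -> R -> T is
    considered only on T x [0,1]; continuity is w.r.t. the product of the
    metric topology on T and the usual topology on I = [0,1]. *)
Definition inI (t : R) : Prop := 0 <= t <= 1.

Definition strong_deformation_contraction {T : Type} (d : T -> T -> R) (x0 : T)
  (H : T -> R -> T) : Prop :=
  (forall x t, inI t -> forall eps, 0 < eps -> exists delta, 0 < delta /\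
      forall y s, inI s -> d x y < delta -> Rabs (t - s) < delta ->
        d (H x t) (H y s) < eps) /\
  (forall x, H x 0 = x) /\
  (forall x, H x 1 = x0) /\ (forall t, inI t -> H x0 t = x0) /\
  (forall x y t, inI t -> d (H x t) (H y t) <= d x y).

(** The wedge of the family X (indexed by nat, standing for Z^+):
    the wedge point, or a point of some X i distinct from its base point. *)
Inductive wedge (X : nat -> PMetric) : Type :=
| wpt : wedge X
| wpiece (i : nat) (x : X i) (hx : x <> pm_pt (X i)) : wedge X.

Arguments wpt {X}.
Arguments wpiece {X} i x hx.

Definition winj {X : nat -> PMetric} (i : nat) (x : X i) : wedge X :=
  match excluded_middle_informative (x = pm_pt (X i)) with
  | left _ => wpt
  | right h => wpiece i x h
  end.

Definition wbase {X : nat -> PMetric} (w : wedge X) : R :=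
  match w with
  | wpt => 0
  | wpiece i x _ => pm_d (X i) x (pm_pt (X i))
  end.

Definition wedge_dist {X : nat -> PMetric} (w v : wedge X) : R :=
  match w, v with
  | wpt, _ => wbase v
  | _, wpt => wbase w
  | wpiece i x _, wpiece j y _ =>
      match Nat.eq_dec j i with
      | left e => pm_d (X i) x (eq_rect j (fun k => pm_car (X k)) y i e)
      | right _ => pm_d (X i) x (pm_pt (X i)) + pm_d (X j) y (pm_pt (X j))
      end
  end.

Definition wedge_R {X : nat -> PMetric} (Rf : forall i, X i -> R -> X i)
  (w : wedge X) (t : R) : wedge X :=
  match w with
  | wpt => wpt
  | wpiece i x _ => winj i (Rf i x t)
  end.

(* Main.v *)
Require Import Defs.
From Stdlib Require Import Reals Lra Arith Eqdep_dec ProofIrrelevance Classical ClassicalEpsilon.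
Open Scope R_scope.

Section W.
Variable X : nat -> PMetric.

Lemma d_nn (i : nat) (a b : X i) : 0 <= pm_d (X i) a b.
Proof.
  pose proof (pm_d_tri (X i) a b a). rewrite (pm_d_sym (X i) b a) in H.
  assert (pm_d (X i) a a = 0) by (apply pm_d_eq0; reflexivity). lra.
Qed.

Lemma d_self (i : nat) (a : X i) : pm_d (X i) a a = 0.
Proof. apply pm_d_eq0; reflexivity. Qed.

Lemma winj_pt i : @winj X i (pm_pt (X i)) = wpt.
Proof. unfold winj. destruct excluded_middle_informative; [reflexivity|congruence]. Qed.

Lemma winj_piece i (x : X i) hx : @winj X i x = wpiece i x hx.
Proof. unfold winj. destruct excluded_middle_informative; [congruence|].
  f_equal. apply proof_irrelevance. Qed.

Lemma wbase_winj i (x : X i) : wbase (@winj X i x) = pm_d (X i) x (pm_pt (X i)).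
Proof. destruct (classic (x = pm_pt (X i))) as [e|n].
  - subst. rewrite winj_pt. simpl. rewrite d_self. reflexivity.
  - rewrite (winj_piece _ _ n). reflexivity. Qed.

Lemma wd_pt_l v : @wedge_dist X wpt v = wbase v.
Proof. reflexivity. Qed.
Lemma wd_pt_r v : @wedge_dist X v wpt = wbase v.
Proof. destruct v; reflexivity. Qed.

Lemma wd_same i (a b : X i) : wedge_dist (@winj X i a) (winj i b) = pm_d (X i) a b.
Proof.
  destruct (classic (a = pm_pt (X i))) as [ea|na].
  - subst. rewrite winj_pt, wd_pt_l, wbase_winj, pm_d_sym. reflexivity.
  - destruct (classic (b = pm_pt (X i))) as [eb|nb].
    + subst. rewrite winj_pt, wd_pt_r, wbase_winj. reflexivity.
    + rewrite (winj_piece _ _ na), (winj_piece _ _ nb). simpl.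
      destruct (Nat.eq_dec i i) as [e|n]; [|congruence].
      rewrite (UIP_refl_nat _ e). reflexivity.
Qed.

Lemma wd_diff i j (a : X i) (b : X j) : i <> j ->
  wedge_dist (@winj X i a) (winj j b) = pm_d (X i) a (pm_pt (X i)) + pm_d (X j) b (pm_pt (X j)).
Proof.
  intro hij.
  destruct (classic (a = pm_pt (X i))) as [ea|na].
  - subst. rewrite winj_pt, wd_pt_l, wbase_winj, d_self. lra.
  - destruct (classic (b = pm_pt (X j))) as [eb|nb].
    + subst. rewrite winj_pt, wd_pt_r, wbase_winj, d_self. lra.
    + rewrite (winj_piece _ _ na), (winj_piece _ _ nb). simpl.
      destruct (Nat.eq_dec j i) as [e|n]; [congruence|]. reflexivity.
Qed.

Lemma wbase_nn (v : wedge X) : 0 <= wbase v.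
Proof. destruct v; simpl; [lra| apply d_nn]. Qed.

End W.

Theorem mainTheorem6 (X : nat -> PMetric) (Rf : forall i, X i -> R -> X i)
  (HR : forall i, strong_deformation_contraction (pm_d (X i)) (pm_pt (X i)) (Rf i)) :
  (* well-definedness: R agrees with R_i on (the image of) every X_i,
     including at the identified base point *)
  (forall i (x : X i) t, inI t -> wedge_R Rf (winj i x) t = winj i (Rf i x t)) /\
  strong_deformation_contraction (@wedge_dist X) (@wpt X) (wedge_R Rf).
Proof.
  assert (P1 : forall i (x : X i) t, inI t -> wedge_R Rf (winj i x) t = winj i (Rf i x t)).
  { intros i x t ht. destruct (classic (x = pm_pt (X i))) as [e|n].
    - subst. rewrite winj_pt. destruct (HR i) as (_&_&_&H4&_). rewrite H4 by exact ht.
      rewrite winj_pt. reflexivity.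
    - rewrite (winj_piece _ _ _ n). reflexivity. }
  split; [exact P1|].
  assert (Rpt : forall i t, inI t -> Rf i (pm_pt (X i)) t = pm_pt (X i)).
  { intros i t ht. destruct (HR i) as (_&_&_&H4&_). auto. }
  assert (Lip : forall i (x y : X i) t, inI t -> pm_d (X i) (Rf i x t) (Rf i y t) <= pm_d (X i) x y).
  { intros i x y t ht. destruct (HR i) as (_&_&_&_&H5). auto. }
  assert (Hbase : forall v t, inI t -> wbase (wedge_R Rf v t) <= wbase v).
  { intros [|i x hx] t ht; simpl; [lra|].
    rewrite wbase_winj. pose proof (Lip i x (pm_pt (X i)) t ht) as L. rewrite (Rpt i t ht) in L. exact L. }
  split; [|split; [|split; [|split]]].
  - intros [|i x hx] t ht eps heps.
    + exists eps. split; [lra|]. intros y s hs hy _. simpl.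
      rewrite wd_pt_l in *. pose proof (Hbase y s hs). lra.
    + destruct (HR i) as (Hc&_). destruct (Hc x t ht eps heps) as (dl&hdl&Hd).
      assert (hr : 0 < pm_d (X i) x (pm_pt (X i))).
      { pose proof (d_nn X i x (pm_pt (X i))).
        destruct (Req_dec (pm_d (X i) x (pm_pt (X i))) 0) as [e|]; [|lra].
        apply pm_d_eq0 in e. contradiction. }
      exists (Rmin dl (pm_d (X i) x (pm_pt (X i)))). split; [apply Rmin_glb_lt; lra|].
      intros [|j y hy] s hs hd hts.
      * simpl in hd. pose proof (Rmin_r dl (pm_d (X i) x (pm_pt (X i)))). lra.
      * pose proof (Rmin_r dl (pm_d (X i) x (pm_pt (X i)))).
        pose proof (Rmin_l dl (pm_d (X i) x (pm_pt (X i)))).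
        rewrite <- (winj_piece X i x hx), <- (winj_piece X j y hy) in *.
        destruct (Nat.eq_dec i j) as [e|n].
        -- subst j. rewrite !P1 by assumption. rewrite wd_same in *.
           apply Hd; auto; lra.
        -- rewrite wd_diff in hd by assumption. pose proof (d_nn X j y (pm_pt (X j))). lra.
  - intros [|i x hx]; [reflexivity|]. simpl. destruct (HR i) as (_&H2&_).
    rewrite H2. apply winj_piece.
  - intros [|i x hx]; [reflexivity|]. simpl. destruct (HR i) as (_&_&H3&_).
    rewrite H3. apply winj_pt.
  - intros; reflexivity.
  - intros w v t ht.
    destruct w as [|i x hx].
    + rewrite wd_pt_l. change (wedge_R Rf wpt t) with (@wpt X). rewrite wd_pt_l. auto.
    + destruct v as [|j y hy].
      * rewrite wd_pt_r. simpl (wedge_R Rf wpt t). rewrite wd_pt_r. auto.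
      * rewrite <- (winj_piece X i x hx), <- (winj_piece X j y hy).
        rewrite !P1 by assumption.
        destruct (Nat.eq_dec i j) as [e|n].
        -- subst j. rewrite !wd_same. auto.
        -- rewrite !wd_diff by assumption.
           pose proof (Lip i x (pm_pt (X i)) t ht) as L1. pose proof (Lip j y (pm_pt (X j)) t ht) as L2. rewrite (Rpt i t ht) in L1. rewrite (Rpt j t ht) in L2.
           lra.
Qed.
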